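(* Let $\Theta$ be a subset of a Polish space with metric $d$, equipped with its Borel $\sigma$-algebra, let $\nu$ be a probability measure on $\Theta$, and let $\{P^\theta:\theta\in\Theta\}$ be probability measures on $(\Omega,\mathcal{F})$ such that $\theta\mapsto P^\theta(A)$ is Borel measurable for each $A\in\mathcal{F}$ and $\theta\mapsto P^\theta$ is continuous in total variation (for every $\theta$ and $\varepsilon>0$ there is $\delta>0$ with $\sup_{A\in\mathcal{F}}|P^\theta(A)-P^{\theta'}(A)|<\varepsilon$ whenever $d(\theta,\theta')<\delta$). Let $\mathbb{P}(A)=\int_\Theta P^\theta(A)\,\nu(\mathrm{d}\theta)$ be the mixture probability measure. Then $\Theta^0:=\{\theta\in\Theta:P^\theta\not\ll\mathbb{P}\}$ is Borel measurable and $\nu(\Theta^0)=0$.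
   Context: $(\Omega,\mathcal{F})$ is a measurable space. *)

(* Defs.v *)
From HB Require Import structures.
From mathcomp Require Import all_boot all_order all_algebra.
From mathcomp Require Import all_classical all_reals all_analysis measurable_realfun.
Set Implicit Arguments. Unset Strict Implicit. Unset Printing Implicit Defensive.
Import Order.TTheory GRing.Theory Num.Theory.
Local Open Scope classical_set_scope.
Local Open Scope ring_scope.

Definition is_metric (R : realType) (X : Type) (d : X -> X -> R) : Prop :=
  [/\ forall x y, 0 <= d x y,
      forall x y, d x y = 0 <-> x = y,
      forall x y, d x y = d y x &
      forall x y z, d x z <= d x y + d y z].

Definition metric_complete (R : realType) (X : Type) (d : X -> X -> R) : Prop :=
  forall u : nat -> X,
    (forall e : R, 0 < e -> exists N : nat, forall m n : nat,
        (N <= m)%N -> (N <= n)%N -> d (u m) (u n) < e) ->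
    exists l : X, forall e : R, 0 < e -> exists N : nat, forall n : nat,
        (N <= n)%N -> d (u n) l < e.

Definition metric_separable (R : realType) (X : Type) (d : X -> X -> R) : Prop :=
  exists D : set X, countable D /\
    forall x e, 0 < e -> exists2 y, D y & d x y < e.

Definition polish (R : realType) (X : Type) (d : X -> X -> R) : Prop :=
  [/\ is_metric d, metric_complete d & metric_separable d].

Definition metric_open (R : realType) (T : Type) (d : T -> T -> R) (A : set T)
  : Prop :=
  forall x, A x -> exists2 e : R, 0 < e & forall y, d x y < e -> A y.

Definition borel_of_metric (R : realType) (dT : measure_display)
  (T : measurableType dT) (d : T -> T -> R) : Prop :=
  @measurable _ T = <<s metric_open d >>.

Definition mixture (R : realType) (dT dO : measure_display)
  (T : measurableType dT) (Om : measurableType dO)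
  (nu : probability T R) (P : T -> probability Om R) : set Om -> \bar R :=
  fun A => (\int[nu]_(th in setT) P th A)%E.

(* Main.v *)
Require Import Defs.
From HB Require Import structures.
From mathcomp Require Import all_boot all_order all_algebra.
From mathcomp Require Import all_classical all_reals all_analysis measurable_realfun.
From mathcomp Require Import lra.
Import Order.TTheory GRing.Theory Num.Theory.
Local Open Scope classical_set_scope.
Local Open Scope ring_scope.

Theorem lemma6p9 (R : realType)
  (X : Type) (dX : X -> X -> R) (hX : polish dX)
  (dT : measure_display) (T : measurableType dT) (iota : T -> X)
  (hiota : injective iota)
  (hborel : borel_of_metric (fun th th' => dX (iota th) (iota th')))
  (nu : probability T R)
  (dO : measure_display) (Om : measurableType dO)
  (P : T -> probability Om R)
  (hPmeas : forall A : set Om, measurable A ->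
     measurable_fun setT (fun th => P th A))
  (hTV : forall (th : T) (e : R), 0 < e -> exists2 delta : R, 0 < delta &
     forall th' : T, dX (iota th) (iota th') < delta ->
       (ereal_sup [set `|(P th A - P th' A)%E|%E | A in @measurable _ Om] < e%:E)%E) :
  measurable [set th : T | ~ (P th `<< mixture nu P)] /\
  nu [set th : T | ~ (P th `<< mixture nu P)] = 0%E.
Proof.
case: hX => -[d0 dE dC dtri] _ [D [cD dD]].
set Th0 := [set th : T | ~ (P th `<< mixture nu P)].
pose ball (y : X) (r : R) := [set th : T | dX y (iota th) < r].
have mball y r : measurable (ball y r).
  rewrite hborel; apply: sub_sigma_algebra => x bx.
  exists (r - dX y (iota x)); first by rewrite subr_gt0.
  move=> z xz; rewrite /ball /=.
  by rewrite (le_lt_trans (dtri _ (iota x) _))// -ltrBrDl.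
have Th0E th : Th0 th -> exists A, [/\ measurable A, mixture nu P A = 0%E & (0 < P th A)%E].
  move=> nd; apply: contrapT => hno; apply: nd.
  move=> N NN; rewrite /null_set /= => A mA AN.
  have mA0 := NN A mA AN.
  apply/eqP; rewrite eq_le measure_ge0 andbT leNgt; apply/negP => pos.
  by apply: hno; exists A.
have Th0I th A : measurable A -> mixture nu P A = 0%E -> (0 < P th A)%E -> Th0 th.
  move=> mA m0 pos dom.
  have : (mixture nu P).-null_set A.
    move=> B mB BA; apply/eqP; rewrite eq_le; apply/andP; split.
      rewrite -m0; apply: ge0_le_integral => //; first exact: hPmeas.
      - exact: hPmeas.
      - by move=> x _; apply: le_measure => //; rewrite inE.
    exact: integral_ge0.
  move=> /dom /(_ A mA (@subset_refl _ A)) P0.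
  by rewrite P0 ltxx in pos.
have key th A : measurable A -> (0 < P th A)%E -> exists2 delta : R, 0 < delta &
    forall th', dX (iota th) (iota th') < delta -> (0 < P th' A)%E /\
      (mixture nu P A = 0%E -> nu (ball (iota th) delta) = 0%E).
  move=> mA pos.
  have fin t : P t A \is a fin_num by apply: fin_num_measure.
  set c := fine (P th A).
  have Pc : P th A = c%:E by rewrite fineK.
  have c0 : 0 < c by rewrite -lte_fin -Pc.
  have [delta dpos hd] := hTV th (c/2) (divr_gt0 c0 (ltr0Sn _ 1)).
  have lower th' : dX (iota th) (iota th') < delta -> ((c/2)%:E < P th' A)%E.
    move=> dth; have := hd th' dth.
    have ub : (`|P th A - P th' A| <= ereal_sup [set `|(P th A - P th' A)%E|%E | A in @measurable _ Om])%E.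
      by apply: ereal_sup_ubound; exists A.
    move=> /(le_lt_trans ub); rewrite Pc -(fineK (fin th')) -EFinB abse_EFin lte_fin.
    rewrite ltr_norml => /andP[h1 h2]; rewrite lte_fin; lra.
  exists delta => // th' dth; split.
    by apply: lt_trans (lower _ dth); rewrite lte_fin divr_gt0.
  move=> m0; apply/eqP; rewrite eq_le measure_ge0 andbT.
  have h : ((c/2)%:E * nu (ball (iota th) delta) <= mixture nu P A)%E.
    rewrite -integral_cst //.
    apply: (le_trans _ (@ge0_subset_integral _ _ _ nu (ball (iota th) delta) setT (mball _ _) measurableT _ (hPmeas A mA) _ (@subsetT _ _))); last first.
      by move=> x _.
    apply: ge0_le_integral => //.
    - by move=> x _; rewrite lee_fin; apply/ltW/divr_gt0.
    - by apply: measurable_funTS; exact: hPmeas.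
    - by move=> x bx; apply/ltW/lower.
  move: h; rewrite m0 => h.
  by rewrite -(@lee_pmul2l _ ((c/2)%:E)) ?mule0 // lte_fin divr_gt0.
have mTh0 : measurable Th0.
  rewrite hborel; apply: sub_sigma_algebra => th /Th0E [A [mA m0 pos]].
  have [delta dpos hd] := key th A mA pos.
  exists delta => // th' /hd [+ _]; exact: Th0I.
split => //.
have /countable_injP [f finj] := cD.
pose B n k := [set th | exists y, [/\ D y, f y = k, nu (ball y (n.+1%:R^-1)) = 0%E & dX y (iota th) < n.+1%:R^-1]].
have negB n k : nu.-negligible (B n k).
  case: (pselect (exists y, [/\ D y, f y = k & nu (ball y n.+1%:R^-1) = 0%E])) => [[y0 [Dy0 fy0 ny0]]|no].
  - exists (ball y0 n.+1%:R^-1); split => //.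
    move=> th [y [Dy fy ny dy]].
    have e : y = y0 by apply: finj; rewrite ?inE // fy fy0.
    by rewrite /ball /= -e.
  - exists set0; split => //.
    by move=> th [y [Dy fy ny _]]; apply: no; exists y; split.
have sub : Th0 `<=` \bigcup_n \bigcup_k B n k.
  move=> th /Th0E [A [mA m0 pos]]; have [delta dpos hd] := key th A mA pos.
  have dth : dX (iota th) (iota th) < delta by rewrite (proj2 (dE _ _) erefl).
  have nb := (hd th dth).2 m0.
  have [n hn] := @ltr_add_invr R 0 (delta/2) (divr_gt0 dpos (ltr0Sn _ 1)).
  rewrite add0r in hn.
  have npos : 0 < n.+1%:R^-1 :> R by rewrite invr_gt0.
  have [y Dy dy] := dD (iota th) (n.+1%:R^-1) npos.
  exists n => //; exists (f y) => //; exists y; split => //; last by rewrite dC.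
  apply/eqP; rewrite eq_le measure_ge0 andbT -nb; apply: le_measure; rewrite ?inE //.
  move=> z; rewrite /ball /= => bz.
  have := dtri (iota th) y (iota z) => t.
  apply: (le_lt_trans t); apply: (lt_le_trans (ltrD dy bz)).
  rewrite [leRHS](splitr delta) lerD // ltW //.
apply: measure_negligible => //; apply: (negligibleS sub).
apply: negligible_bigcup => n; apply: negligible_bigcup => k; exact: negB.
Qed.
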